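(* Let $A$ be a finite abelian group of even order and $H$ a subgroup of $A$ such that every element of $H$ is a square in $A$. Then $H$ is a subgroup perfect code of $A$ if and only if $H=\{2a:a\in A\}$.
   Context: $A$ is written additively with identity $0$. An element $x$ of $A$ is a square if $x=2y$ for some $y\in A$; a subset is square-free if it contains no squares. For a square-free $T\subseteq A$, the Cayley sum graph $\mathrm{CayS}(A,T)$ is the simple graph with vertex set $A$ in which distinct $x,y$ are adjacent iff $x+y\in T$. A subset $C$ of the vertex set of a graph is a perfect code if every vertex is at distance at most one from exactly one vertex of $C$. A subgroup $H$ of $A$ is a subgroup perfect code of $A$ if $H$ is a perfect code of $\mathrm{CayS}(A,T)$ for some square-free $T\subseteq A$ (the empty set allowed). *)

(* Defs.v *)
From HB Require Import structures.
From mathcomp Require Import all_boot all_order all_algebra.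
Set Implicit Arguments. Unset Strict Implicit. Unset Printing Implicit Defensive.
Import GRing.Theory.
Local Open Scope ring_scope.

(* A finite abelian group A is a finZmodType (written additively, identity 0). *)

Definition is_square (A : finZmodType) (x : A) : bool := [exists y : A, x == y *+ 2].

Definition square_free (A : finZmodType) (T : {set A}) : Prop :=
  forall x, x \in T -> ~~ is_square x.

Definition is_subgroup (A : finZmodType) (H : {set A}) : Prop :=
  0 \in H /\ (forall x y, x \in H -> y \in H -> x - y \in H).

Definition cays_adj (A : finZmodType) (T : {set A}) (x y : A) : bool :=
  (x != y) && (x + y \in T).

Definition perfect_code (V : finType) (adj : V -> V -> bool) (C : {set V}) : Prop :=
  forall v : V, #|[set c in C | (c == v) || adj v c]| = 1%N.

Definition subgroup_perfect_code (A : finZmodType) (H : {set A}) : Prop :=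
  is_subgroup H /\
  exists T : {set A}, square_free T /\ perfect_code (cays_adj T) H.

(* Main.v *)
Require Import Defs.
From HB Require Import structures.
From mathcomp Require Import all_boot all_order all_algebra.
Import GRing.Theory.
Local Open Scope ring_scope.

Lemma sg_facts (A : finZmodType) (H : {set A}) : is_subgroup H ->
  (forall x, x \in H -> - x \in H) /\ (forall x y, x \in H -> y \in H -> x + y \in H).
Proof.
move=> [H0 HB]; have HN : forall x, x \in H -> - x \in H.
  by move=> x hx; rewrite -sub0r; apply: HB.
split=> // x y hx hy; rewrite -(opprK y); apply: HB => //; exact: HN.
Qed.

Theorem lemma3p5 (A : finZmodType) (H : {set A}) :
  ~~ odd #|A| ->
  is_subgroup H ->
  (forall h, h \in H -> is_square h) ->
  (subgroup_perfect_code H <-> H = [set a *+ 2 | a : A]).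
Proof.
move=> _ sg sqH; have [HN HD] := @sg_facts _ _ sg; have [H0 HB] := sg.
split.
- move=> [_ [T [sfT pc]]]; apply/setP => v; apply/idP/idP.
    move=> /sqH /existsP [y /eqP ->]; by apply/imsetP; exists y.
  move=> /imsetP [a _ ->]; apply/negPn/negP => vH.
  have := pc (a *+ 2); set S := [set _ in _ | _] => cS.
  have : (0 < #|S|)%N by rewrite cS.
  move=> /card_gt0P [c]; rewrite inE => /andP [cH /orP [/eqP ce|]].
    by rewrite -ce cH in vH.
  rewrite /cays_adj => /andP [_ inT].
  have := sfT _ inT; move: (sqH _ cH) => /existsP [y /eqP ->].
  by rewrite -mulrnDl => /existsP; apply; exists (a + y).
- move=> HH; split=> //.
  pose rep (x : A) := odflt 0 [pick y | y - x \in H].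
  have rep_in : forall x, rep x - x \in H.
    move=> x; rewrite /rep; case: pickP => [y Hy|none] //=.
    by have := none x; rewrite subrr H0.
  have rep_eq : forall x x', x - x' \in H -> rep x = rep x'.
    move=> x x' hx; rewrite /rep; congr odflt; apply: eq_pick => y /=.
    apply/idP/idP => h.
      by have := HD _ _ h hx; rewrite addrA subrK.
    by have := HB _ _ h hx; rewrite opprB addrA subrK.
  exists [set x | (x \notin H) && (rep x == x)]; split.
    move=> x; rewrite inE => /andP [xH _]; apply/negP => /existsP [y /eqP e].
    by move: xH; rewrite HH e; move/negP; apply; apply/imsetP; exists y.
  move=> v; case: (boolP (v \in H)) => vH.
    rewrite (_ : [set _ in _ | _] = [set v]) ?cards1 //; apply/setP => c; rewrite !inE /cays_adj inE.
    apply/idP/idP.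
      move=> /andP [cH /orP [/eqP -> //|/andP [_ /andP [/negP []]]]].
      exact: HD.
    by move/eqP => ->; rewrite vH eqxx.
  rewrite (_ : [set _ in _ | _] = [set rep v - v]) ?cards1 //; apply/setP => c; rewrite !inE /cays_adj inE.
  apply/idP/idP.
    move=> /andP [cH /orP [/eqP ce|/andP [_ /andP [_ /eqP re]]]].
      by move: vH; rewrite -ce cH.
    have : rep (v + c) = rep v by apply: rep_eq; rewrite addrC addKr.
    by rewrite re => <-; rewrite addrC addKr.
  move/eqP => ->; rewrite rep_in /=; apply/orP; right.
  have rvH : rep v \notin H.
    apply/negP => rH; move/negP: vH; apply.
    by have := HB _ _ rH (rep_in v); rewrite opprB addrC subrK.
  rewrite (addrC v) subrK rvH /=; apply/andP; split.
    by apply/negP => /eqP e; move/negP: vH; apply; rewrite {1}e; exact: rep_in.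
  apply/eqP; apply: rep_eq; exact: rep_in.
Qed.
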